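(* For any positive integers $m$ and $s_1,\ldots,s_m$ there is a constant $c=c(s_1,\ldots,s_m)$ such that the following holds: if $n=p_1^{s_1}\cdots p_m^{s_m}$ with primes $p_1<p_2<\cdots<p_m$ and $p_1>c$, then the $n\times n$ square has no perfect Mondrian partition.
   Context: A Mondrian partition of an $n\times n$ square ($n$ a positive integer) is a dissection of the square into $k\ge 2$ non-overlapping rectangles with positive integer side lengths which are pairwise non-congruent (rectangles of dimensions $a\times b$ and $b\times a$ count as congruent). It is perfect if all its rectangles have the same area (i.e., its defect, the difference between the largest and smallest areas, is $0$). *)

(* Defs.v *)
From mathcomp Require Import all_boot.
Set Implicit Arguments. Unset Strict Implicit. Unset Printing Implicit Defensive.

Record rect := Rect { rx : nat; ry : nat; rw : nat; rh : nat }.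

(* The unit cell [i,i+1] x [j,j+1] lies inside the rectangle r. *)
Definition cell_in (r : rect) (i j : nat) : bool :=
  (rx r <= i < rx r + rw r) && (ry r <= j < ry r + rh r).

Definition area (r : rect) : nat := rw r * rh r.

Definition congruent (r1 r2 : rect) : bool :=
  ((rw r1 == rw r2) && (rh r1 == rh r2)) || ((rw r1 == rh r2) && (rh r1 == rw r2)).

(* A dissection of the n x n square [0,n]^2 into the k rectangles R t:
   each rectangle has positive integer sides and lies in the square, and
   every unit cell of the square is covered by exactly one rectangle
   (so interiors are disjoint and the union is the whole square). *)
Definition dissection (n k : nat) (R : 'I_k -> rect) : Prop :=
  (forall t, 0 < rw (R t) /\ 0 < rh (R t) /\
             rx (R t) + rw (R t) <= n /\ ry (R t) + rh (R t) <= n) /\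
  (forall i j, i < n -> j < n -> #|[set t | cell_in (R t) i j]| = 1).

Definition mondrian_partition (n k : nat) (R : 'I_k -> rect) : Prop :=
  2 <= k /\ dissection n R /\
  (forall t u : 'I_k, t != u -> ~~ congruent (R t) (R u)).

Definition perfect_mondrian (n k : nat) (R : 'I_k -> rect) : Prop :=
  mondrian_partition n R /\ (forall t u : 'I_k, area (R t) = area (R u)).

Definition has_perfect_mondrian (n : nat) : Prop :=
  exists (k : nat) (R : 'I_k -> rect), perfect_mondrian n R.

(* Main.v *)
Require Import Defs.
From mathcomp Require Import all_boot zify.

Lemma count_int a w n : \sum_(i < n) ((a <= i) && (i < a + w)) = minn (n - a) w.
Proof.
elim: n => [|n IH]; first by rewrite big_ord0; lia.
rewrite big_ord_recr /= IH.
case: (leqP a n) => Ha; case: (ltnP n (a + w)) => Hb /=; lia.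
Qed.

Lemma area_cells r n : rx r + rw r <= n -> ry r + rh r <= n ->
  area r = \sum_(i < n) \sum_(j < n) cell_in r i j.
Proof.
move=> H1 H2.
have E : forall i j, (cell_in r i j : nat) = ((rx r <= i) && (i < rx r + rw r)) * ((ry r <= j) && (j < ry r + rh r)).
  by move=> i j; rewrite mulnb.
under eq_bigr => i _ do under eq_bigr => j _ do rewrite E.
under eq_bigr => i _ do rewrite -big_distrr /=.
rewrite -big_distrl /= !count_int /area; lia.
Qed.

Lemma sum_area n k (R : 'I_k -> rect) : dissection n R ->
  \sum_(t < k) area (R t) = n * n.
Proof.
move=> [Hb Hc].
rewrite (eq_bigr (fun t => \sum_(i < n) \sum_(j < n) cell_in (R t) i j)); last first.
  by move=> t _; have [_ [_ [? ?]]] := Hb t; apply: area_cells.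
rewrite exchange_big /=.
rewrite (eq_bigr (fun i : 'I_n => n)).
  by rewrite sum_nat_const card_ord.
move=> i _; rewrite exchange_big /=.
rewrite (eq_bigr (fun j : 'I_n => 1)).
  by rewrite sum_nat_const card_ord muln1.
move=> j _.
rewrite -(Hc i j (ltn_ord i) (ltn_ord j)) cardsE -sum1_card [RHS]big_mkcond /=.
apply: eq_bigr => t _; rewrite /cell_in unfold_in /=; by case: ifP.
Qed.
Lemma logn_prod m (p s : 'I_m -> nat) q : (forall i, prime (p i)) ->
  0 < \prod_(i < m) p i ^ s i /\
  logn q (\prod_(i < m) p i ^ s i) = \sum_(i < m) s i * (q == p i).
Proof.
move=> pr.
apply: (big_rec2 (fun x y => 0 < y /\ logn q y = x)); first by rewrite logn1.
move=> i x y _ [Hy Hl]; have Hp := prime_gt0 (pr i).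
split; first by rewrite muln_gt0 expn_gt0 Hp Hy.
by rewrite lognM ?expn_gt0 ?Hp // lognX logn_prime // Hl.
Qed.

Theorem mainTheorem6 (m : nat) (s : 'I_m -> nat) :
  0 < m -> (forall i, 0 < s i) ->
  exists c : nat, forall (p : 'I_m -> nat) (n : nat),
    (forall i, prime (p i)) ->
    (forall i j : 'I_m, (i < j)%N -> p i < p j) ->
    (forall i : 'I_m, c < p i) ->
    n = \prod_(i < m) p i ^ s i ->
    ~ has_perfect_mondrian n.
Proof.
move=> m_gt0 s_gt0.
set T := \sum_(i < m) s i.
exists ((2 * T).+1 ^ m) => p n pr _ big En [k [R [[k2 [D Nc]] Ar]]].
have [npos Hlog] : 0 < n /\ forall q, logn q n = \sum_(i < m) s i * (q == p i).
  split; first by rewrite En; case: (@logn_prod m p s 0 pr).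
  by move=> q; rewrite En; case: (@logn_prod m p s q pr).
have Tb : forall q, logn q n <= T.
  move=> q; rewrite Hlog /T; apply: leq_sum => i _; case: (q == p i) => /=; lia.
have T0 : forall q, (forall i, q != p i) -> logn q n = 0.
  move=> q Hq; rewrite Hlog big1 // => i _; by rewrite (negbTE (Hq i)) muln0.
pose t0 := Ordinal (ltnW k2).
set A := area (R t0).
have HN : k * A = n * n.
  rewrite -(@sum_area n k R D) (eq_bigr (fun _ => A)); last by move=> t _; rewrite /A (Ar t0 t).
  by rewrite sum_nat_const card_ord.
have Nlog : forall q, logn q (n * n) = 2 * logn q n.
  by move=> q; rewrite lognM //; lia.
have wdiv : forall t, rw (R t) %| n * n.
  move=> t; rewrite -HN /A (Ar t0 t) /area; by apply: dvdn_mull; apply: dvdn_mulr.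
have wpos : forall t, 0 < rw (R t).
  move=> t0'; by case: (D.1 t0').
have wlog : forall q t, logn q (rw (R t)) <= 2 * logn q n.
  move=> q t; rewrite -Nlog; apply: dvdn_leq_log; [by rewrite muln_gt0 npos | exact: wdiv].
have wlogT : forall q t, logn q (rw (R t)) < (2 * T).+1.
  by move=> q t; have := wlog q t; have := Tb q; lia.
pose g (t : 'I_k) : {ffun 'I_m -> 'I_(2 * T).+1} :=
  [ffun i => inord (logn (p i) (rw (R t)))].
have ginj : injective g.
  move=> t u Hg.
  have Ew : rw (R t) = rw (R u).
    apply: eqn_from_log => // q.
    case: (pickP (fun i => q == p i)) => [i /eqP -> | Hn].
      have := congr1 (fun f : {ffun 'I_m -> 'I_(2 * T).+1} => val (f i)) Hg; rewrite /g !ffunE /= !inordK //.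
    have Hq : forall i, q != p i by move=> i; rewrite Hn.
    have := wlog q t; have := wlog q u; rewrite T0 //; lia.
  have Eh : rh (R t) = rh (R u).
    have := Ar t u; rewrite /area Ew => /eqP; by rewrite eqn_pmul2l // => /eqP.
  apply/eqP; apply: contraT => /Nc; by rewrite /congruent Ew Eh !eqxx.
have kb := @leq_card _ _ g ginj.
rewrite card_ffun !card_ord in kb.
have [q qpr qk] := pdivP k2.
have qN : q %| n * n by rewrite -HN; apply: dvdn_mulr.
have qlog : 0 < logn q n.
  have : 0 < logn q (n * n) by rewrite logn_gt0 mem_primes qpr muln_gt0 npos.
  by rewrite Nlog; lia.
case: (pickP (fun i => q == p i)) => [i /eqP Eq | Hn]; last first.
  by move: qlog; rewrite T0 // => i; rewrite Hn.
have := big i; have := dvdn_leq (ltnW k2) qk; rewrite Eq; lia.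
Qed.
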